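(* The Petersen graph $P$ does not admit an $S_{16}$-coloring.
   Context: For a graph $X$ and vertex $x$, $\partial_X(x)$ denotes the set of edges of $X$ incident to $x$. For cubic graphs $G, H$, an $H$-coloring of $G$ is a map $f: E(G)\to E(H)$ such that for every vertex $x$ of $G$ there is a vertex $y$ of $H$ with $f(\partial_G(x))=\partial_H(y)$. $S_{16}$ is the simple cubic graph on $16$ vertices with a central vertex $c$ and, for each $i\in\{1,2,3\}$, vertices $v_1^i,\dots,v_5^i$ with edges $v_1^iv_2^i, v_1^iv_3^i, v_1^iv_4^i, v_2^iv_3^i, v_2^iv_4^i, v_3^iv_5^i, v_4^iv_5^i$ and $v_5^ic$. *)

(* Defs.v *)
From mathcomp Require Import all_boot.
Unset Printing Implicit Defensive.

Definition edge_set (V : finType) (adj : rel V) : {set {set V}} :=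
  [set [set x; y] | x in V, y in V & adj x y].

Definition edge_type (V : finType) (adj : rel V) : finType :=
  {e : {set V} | e \in edge_set V adj}.

Definition incident (V : finType) (adj : rel V) (x : V) : {set edge_type V adj} :=
  [set e : edge_type V adj | x \in val e].

Definition H_coloring (VG VH : finType) (adjG : rel VG) (adjH : rel VH)
  (f : edge_type VG adjG -> edge_type VH adjH) : Prop :=
  forall x : VG, exists y : VH, f @: incident VG adjG x = incident VH adjH y.

Definition admits_coloring (VG VH : finType) (adjG : rel VG) (adjH : rel VH) :=
  exists f : edge_type VG adjG -> edge_type VH adjH, H_coloring VG VH adjG adjH f.

Definition adj_of_list (n : nat) (l : seq (nat * nat)) : rel 'I_n :=
  fun x y => ((nat_of_ord x, nat_of_ord y) \in l) || ((nat_of_ord y, nat_of_ord x) \in l).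

(* Petersen graph: outer 5-cycle 0..4, spokes i -- i+5, inner pentagram on 5..9. *)
Definition petersen_edges : seq (nat * nat) :=
  [:: (0,1); (1,2); (2,3); (3,4); (4,0);
      (0,5); (1,6); (2,7); (3,8); (4,9);
      (5,7); (7,9); (9,6); (6,8); (8,5)].
Definition petersen : rel 'I_10 := adj_of_list 10 petersen_edges.

(* S_16: c = 0 and v_k^i = 5*(i-1) + k  (i in {1,2,3}, k in {1..5}). *)
Definition S16_block (i : nat) : seq (nat * nat) :=
  let v k := 5 * i + k in
  [:: (v 1, v 2); (v 1, v 3); (v 1, v 4); (v 2, v 3); (v 2, v 4);
      (v 3, v 5); (v 4, v 5); (v 5, 0)].
Definition S16_edges : seq (nat * nat) := S16_block 0 ++ S16_block 1 ++ S16_block 2.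
Definition S16 : rel 'I_16 := adj_of_list 16 S16_edges.

(* Main.v *)
Require Import Defs.
From mathcomp Require Import all_boot.
Set Implicit Arguments. Unset Strict Implicit.
Definition cons3 : seq (nat*nat*nat) :=
 [:: (0,4,5); (0,1,6); (1,2,7); (2,3,8); (3,4,9); (5,10,14); (6,12,13); (7,10,11); (8,13,14); (9,11,12)].
Definition se : seq (nat*nat) := [:: (1,2); (1,3); (1,4); (2,3); (2,4); (3,5); (4,5); (5,0); (6,7); (6,8); (6,9); (7,8); (7,9); (8,10); (9,10); (10,0); (11,12); (11,13); (11,14); (12,13); (12,14); (13,15); (14,15); (15,0)].
Lemma se_eq : S16_edges = se. Proof. reflexivity. Qed.
Definition ep j := nth (1,2) se j.
Definition inc y j := (y == (ep j).1) || (y == (ep j).2).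
Definition pairok u v := (u != v) && (inc (ep u).1 v || inc (ep u).2 v).
Definition good3 a b c :=
  if a == b then false else if a == c then false else if b == c then false else
  let p := ep a in
  if inc p.1 b then (if inc p.1 c then true else if inc p.2 b then inc p.2 c else false)
  else if inc p.2 b then inc p.2 c else false.
Lemma good3E a b c : good3 a b c = [&& a != b, a != c, b != c &
   (inc (ep a).1 b && inc (ep a).1 c) || (inc (ep a).2 b && inc (ep a).2 c)].
Proof.
rewrite /good3; case: (a == b) => //; case: (a == c) => //; case: (b == c) => //=.
by case: (inc (ep a).1 b); case: (inc (ep a).1 c); case: (inc (ep a).2 b); case: (inc (ep a).2 c).
Qed.
Lemma good3_intro a b c y : a != b -> a != c -> b != c -> inc y a -> inc y b -> inc y c -> good3 a b c.
Proof.
move=> ab ac bc; rewrite good3E ab ac bc /= {1}/inc => /orP[]/eqP <- -> -> //.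
by rewrite orbT.
Qed.
Lemma pair_intro u v y : u != v -> inc y u -> inc y v -> pairok u v.
Proof. by move=> uv; rewrite /pairok uv {1}/inc => /orP[]/eqP <- ->; rewrite ?orbT. Qed.
Lemma good3_common a b c : good3 a b c ->
  [/\ a != b, a != c, b != c & exists y, [&& inc y a, inc y b & inc y c]].
Proof.
rewrite good3E => /and4P[ab ac bc /orP[]/andP[hb hc]]; split=> //.
  by exists (ep a).1; rewrite hb hc /inc eqxx.
by exists (ep a).2; rewrite hb hc /inc eqxx orbT.
Qed.
Lemma good3_pairs a b c : good3 a b c ->
  [&& pairok a b, pairok a c, pairok b c, pairok b a, pairok c a & pairok c b].
Proof.
case/good3_common => ab ac bc [y /and3P[ha hb hc]].
by rewrite !(pair_intro (y := y)) // eq_sym.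
Qed.
Definition adjl : seq (seq nat) := [:: [:: 1; 2; 3; 4]; [:: 0; 2; 3; 5]; [:: 0; 1; 4; 6]; [:: 0; 1; 4; 5]; [:: 0; 2; 3; 6]; [:: 1; 3; 6; 7]; [:: 2; 4; 5; 7]; [:: 5; 6; 15; 23]; [:: 9; 10; 11; 12]; [:: 8; 10; 11; 13]; [:: 8; 9; 12; 14]; [:: 8; 9; 12; 13]; [:: 8; 10; 11; 14]; [:: 9; 11; 14; 15]; [:: 10; 12; 13; 15]; [:: 7; 13; 14; 23]; [:: 17; 18; 19; 20]; [:: 16; 18; 19; 21]; [:: 16; 17; 20; 22]; [:: 16; 17; 20; 21]; [:: 16; 18; 19; 22]; [:: 17; 19; 22; 23]; [:: 18; 20; 21; 23]; [:: 7; 15; 21; 22]].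
Definition srcf i := nth 0 [:: 0;0;1;2;3;0;1;2;3;4;5;7;6;6;5] i.
Definition cands asg i := if i is 0 then iota 0 24 else nth [::] adjl (nth 0 asg (srcf i)).
Fixpoint dok (l : seq (nat*nat*nat)) asg i := if l is t :: l' then
  (let: (a,b,c) := t in if c.+1 == i then (if good3 (nth 0 asg a) (nth 0 asg b) (nth 0 asg c) then dok l' asg i else false) else dok l' asg i) else true.
Fixpoint search n i asg := if dok cons3 asg i then
  match n with 0 => false | n'.+1 => all (fun v => search n' i.+1 (rcons asg v)) (cands asg i) end else true.
Lemma search_ok : search 15 0 [::] = true. Proof. vm_compute. reflexivity. Qed.
Lemma adjl_ok : all (fun u => all (fun v => pairok u v ==> (v \in nth [::] adjl u)) (iota 0 24)) (iota 0 24).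
Proof. vm_compute. reflexivity. Qed.
Lemma cons_ok : all (fun t : nat*nat*nat => let: (a,b,c) := t in (a < c) && (b < c) && (c < 15)) cons3.
Proof. by []. Qed.
Lemma src_ok : all (fun k => (srcf k < k) && has (fun t : nat*nat*nat => let: (a,b,c) := t in
   (k \in [:: a;b;c]) && (srcf k \in [:: a;b;c])) cons3) (iota 1 14).
Proof. by []. Qed.

Definition sat (s : seq nat) := all (fun t : nat*nat*nat => let: (a,b,c) := t in good3 (nth 0 s a) (nth 0 s b) (nth 0 s c)) cons3.

Lemma dok_ok s k l : (forall t, t \in l -> t \in cons3) -> sat s -> k <= size s -> dok l (take k s) k.
Proof.
move=> sub hs hk; elim: l sub => [|[[a b] c] l IH] sub //=.
have tin : (a,b,c) \in cons3 by apply: sub; rewrite inE eqxx.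
rewrite IH; last by move=> t ti; apply: sub; rewrite inE ti orbT.
case: eqP => // ck; subst k.
move/allP: cons_ok => /(_ _ tin) /andP[/andP[ac bc] _].
move/allP: hs => /(_ _ tin) /=.
rewrite !nth_take //; first by move=> ->. all: exact: ltnW.
Qed.

Lemma search0 i asg : search 0 i asg = ~~ dok cons3 asg i.
Proof. reflexivity. Qed.
Lemma searchS n i asg : search n.+1 i asg =
  if dok cons3 asg i then all (fun v => search n i.+1 (rcons asg v)) (cands asg i) else true.
Proof. by []. Qed.
Lemma search_sound s : size s = 15 -> all (fun v => v < 24) s -> sat s -> False.
Proof.
move=> hsz hall hs.
suff H : forall n k, k + n = 15 -> search n k (take k s) = false.
  by move: (H 15 0 erefl); rewrite take0 search_ok.
elim=> [|n IH] k hk.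
  by rewrite search0 dok_ok // hsz -hk addn0.
rewrite searchS dok_ok // ?hsz -?hk ?leq_addr //.
apply/negbTE/allPn; exists (nth 0 s k); last first.
  rewrite -take_nth ?IH ?addSnnS // hsz -hk -addn1 leq_add2l //.
have klt : k < 15 by rewrite -hk -addn1 leq_add2l.
have v24 : nth 0 s k < 24 by apply: (allP hall); rewrite mem_nth // hsz.
case: k hk klt v24 => [|k] hk klt v24; rewrite /cands; first by rewrite mem_iota.
have : k.+1 \in iota 1 14 by rewrite mem_iota.
move/(allP src_ok) => /andP[slt /hasP[[[a b] c] tin /andP[hk1 hk2]]].
rewrite nth_take //.
have u24 : nth 0 s (srcf k.+1) < 24 by apply: (allP hall); rewrite mem_nth // hsz (ltn_trans slt).
have hp : pairok (nth 0 s (srcf k.+1)) (nth 0 s k.+1).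
  move/allP: hs => /(_ _ tin) /= /good3_pairs /and5P[p1 p2 p3 p4 /andP[p5 p6]].
  have sk : srcf k.+1 != k.+1 by rewrite ltn_eqF.
  move: hk1 hk2 sk; rewrite !inE.
  by case/or3P=> /eqP->; case/or3P=> /eqP->; rewrite ?eqxx.
move/allP: adjl_ok => /(_ (nth 0 s (srcf k.+1))); rewrite mem_iota u24 => /(_ isT).
by move/allP => /(_ (nth 0 s k.+1)); rewrite mem_iota v24 hp => /(_ isT).
Qed.
Definition tri : seq (nat*nat*nat) := [:: (7,15,23); (0,1,2); (0,3,4); (1,3,5); (2,4,6); (5,6,7); (8,9,10); (8,11,12); (9,11,13); (10,12,14); (13,14,15); (16,17,18); (16,19,20); (17,19,21); (18,20,22); (21,22,23)].
Definition pe i := nth (0,1) petersen_edges i.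
Definition PS i : {set 'I_10} := [set inord (pe i).1; inord (pe i).2].
Definition SE j : {set 'I_16} := [set inord (ep j).1; inord (ep j).2].

Lemma pe_lt i : ((pe i).1 < 10) && ((pe i).2 < 10).
Proof.
rewrite /pe; case: (ltnP i 15) => h; last by rewrite nth_default.
have : all (fun p : nat*nat => (p.1 < 10) && (p.2 < 10)) petersen_edges by [].
by move/allP; apply; rewrite mem_nth.
Qed.
Lemma ep_lt j : ((ep j).1 < 16) && ((ep j).2 < 16).
Proof.
rewrite /ep; case: (ltnP j 24) => h; last by rewrite nth_default.
have : all (fun p : nat*nat => (p.1 < 16) && (p.2 < 16)) se by [].
by move/allP; apply; rewrite mem_nth.
Qed.
Lemma PS_mem i (x : 'I_10) : (x \in PS i) = (val x == (pe i).1) || (val x == (pe i).2).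
Proof. case/andP: (pe_lt i) => h1 h2. by rewrite !inE -!val_eqE /= !inordK. Qed.
Lemma SE_mem j (x : 'I_16) : (x \in SE j) = inc x j.
Proof. case/andP: (ep_lt j) => h1 h2. by rewrite !inE -!val_eqE /= !inordK. Qed.

Lemma pe_in i : (pe i \in petersen_edges).
Proof. rewrite /pe; case: (ltnP i 15) => h; last by rewrite nth_default. by rewrite mem_nth. Qed.
Lemma ep_in j : (ep j \in se).
Proof. rewrite /ep; case: (ltnP j 24) => h; last by rewrite nth_default. by rewrite mem_nth. Qed.

Lemma PS_edge i : PS i \in edge_set _ petersen.
Proof.
case/andP: (pe_lt i) => h1 h2.
apply/imset2P; exists (inord (pe i).1 : 'I_10) (inord (pe i).2 : 'I_10) => //.
rewrite inE /petersen /adj_of_list !inordK // -surjective_pairing.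
by rewrite pe_in.
Qed.
Lemma SE_edge j : SE j \in edge_set _ S16.
Proof.
case/andP: (ep_lt j) => h1 h2.
apply/imset2P; exists (inord (ep j).1 : 'I_16) (inord (ep j).2 : 'I_16) => //.
rewrite inE /S16 /adj_of_list !inordK // -surjective_pairing.
by rewrite se_eq ep_in.
Qed.
Definition EP i : edge_type _ petersen := exist _ (PS i) (PS_edge i).
Definition ES j : edge_type _ S16 := exist _ (SE j) (SE_edge j).
Lemma S16_ex (e : edge_type _ S16) : has (fun p : nat*nat => [set inord p.1; inord p.2] == val e) se.
Proof.
move: (valP e) => /imset2P[x y _]; rewrite inE => /andP[_ hxy] ->.
move: hxy; rewrite /S16 /adj_of_list se_eq => /orP[] h.
  by apply/hasP; exists (val x, val y) => //=; rewrite !inord_val.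
by apply/hasP; exists (val y, val x) => //=; rewrite !inord_val setUC.
Qed.
Definition gS (e : edge_type _ S16) := find (fun p : nat*nat => [set inord p.1; inord p.2] == val e) se.
Lemma gS_lt e : gS e < 24.
Proof. by rewrite /gS -has_find S16_ex. Qed.
Lemma gS_val e : SE (gS e) = val e.
Proof. by apply/eqP; move: (nth_find (1,2) (S16_ex e)). Qed.

Definition c1 := all (fun x => let: (a,b,c) := nth (0,0,0) cons3 x in
   [&& (x == (pe a).1) || (x == (pe a).2), (x == (pe b).1) || (x == (pe b).2) & (x == (pe c).1) || (x == (pe c).2)]) (iota 0 10).
Lemma c1_ok : c1. Proof. vm_compute. reflexivity. Qed.
Definition c2 := all (fun x => let: (a,b,c) := nth (0,0,0) cons3 x in
  all (fun u => all (fun v => (((u,v) \in petersen_edges) || ((v,u) \in petersen_edges)) ==> ((x == u) || (x == v)) ==>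
   [|| (u,v) == pe a, (v,u) == pe a, (u,v) == pe b, (v,u) == pe b, (u,v) == pe c | (v,u) == pe c]) (iota 0 10)) (iota 0 10)) (iota 0 10).
Lemma c2_ok : c2. Proof. vm_compute. reflexivity. Qed.
Definition sep a b := has (fun z => inc z a && ~~ inc z b) (iota 0 16).
Definition c3 := all (fun y => let: (a,b,c) := nth (0,0,0) tri y in
  [&& inc y a, inc y b, inc y c, sep a b, sep a c & sep b c]) (iota 0 16).
Lemma c3_ok : c3. Proof. vm_compute. reflexivity. Qed.

Lemma pig3 (T : eqType) (p q r r1 r2 r3 : T) : r1 != r2 -> r1 != r3 -> r2 != r3 ->
  r1 \in [:: p; q; r] -> r2 \in [:: p; q; r] -> r3 \in [:: p; q; r] ->
  [&& p != q, p != r & q != r].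
Proof.
rewrite !inE => h12 h13 h23.
case/or3P=> /eqP E1; rewrite E1 {r1 E1} in h12 h13;
case/or3P=> /eqP E2; rewrite E2 {r2 E2} in h12 h23;
case/or3P=> /eqP E3; rewrite E3 {r3 E3} in h13 h23;
rewrite ?eqxx // in h12 h13 h23;
by rewrite ?(eq_sym q p) ?(eq_sym r p) ?(eq_sym r q) in h12 h13 h23 *; rewrite h12 h13 h23.
Qed.

Lemma sep_neq j1 j2 : sep j1 j2 -> ES j1 != ES j2.
Proof.
case/hasP => z; rewrite mem_iota add0n => zlt /andP[h1 h2].
apply/negP => /eqP /(congr1 val) /= E.
have : (Ordinal zlt \in SE j1) by rewrite SE_mem.
by rewrite E SE_mem (negbTE h2).
Qed.

Theorem corollary1 : ~ admits_coloring _ _ petersen S16.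
Proof.
case=> f hf.
pose g i := gS (f (EP i)).
pose s := map g (iota 0 15).
apply: (@search_sound s).
- by rewrite size_map size_iota.
- by apply/allP => v /mapP[i _ ->]; exact: gS_lt.
apply/allP => -[[a b] c] tin.
have xlt : index (a,b,c) cons3 < 10 by rewrite -[10]/(size cons3) index_mem.
pose x : 'I_10 := Ordinal xlt.
have tx : nth (0,0,0) cons3 x = (a,b,c) by rewrite /= nth_index.
move/allP: cons_ok => /(_ _ tin) /andP[/andP[ac bc] c15].
have a15 := ltn_trans ac c15; have b15 := ltn_trans bc c15.
rewrite /s !(nth_map 0) ?size_iota // !nth_iota // !add0n.
case: (hf x) => y hy.
have inx i : x \in PS i -> EP i \in incident _ _ x by move=> h; rewrite inE.
have fy i : EP i \in incident _ _ x -> inc y (g i).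
  move=> h; have : f (EP i) \in f @: incident _ _ x by apply: imset_f.
  by rewrite hy inE -gS_val SE_mem.
move/allP: c1_ok => /(_ (val x)); rewrite mem_iota leq0n add0n ltn_ord tx => /(_ isT).
rewrite -!PS_mem => /and3P[xa xb xc].
have sub : forall e, e \in incident _ _ x -> e \in [:: EP a; EP b; EP c].
  move=> e; rewrite inE; move: (valP e) => /imset2P[u v _].
  rewrite inE => /andP[_ huv] ev; rewrite ev !inE => hx.
  move/allP: c2_ok => /(_ (val x)); rewrite mem_iota leq0n add0n ltn_ord tx => /(_ isT).
  move/allP => /(_ (val u)); rewrite mem_iota ltn_ord => /(_ isT).
  move/allP => /(_ (val v)); rewrite mem_iota ltn_ord => /(_ isT).
  rewrite -!val_eqE in hx.
  move=> /implyP /(_ huv) /implyP /(_ hx) H3.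
  have key i : ((val u, val v) == pe i) || ((val v, val u) == pe i) -> e == EP i.
    move=> hi; rewrite -val_eqE /= ev /PS.
    by case/orP: hi => /eqP <- /=; rewrite !inord_val // setUC.
  case/or4P: H3 => [h|h|h|/orP[h|/orP[h|h]]].
  1,2: by rewrite (key a) ?h ?orbT.
  1,2: by rewrite (key b) ?h ?orbT.
  1,2: by rewrite (key c) ?h ?orbT.
have fin : forall z, z \in incident _ _ y -> z \in [:: f (EP a); f (EP b); f (EP c)].
  move=> z; rewrite -hy => /imsetP[e /sub he ->].
  by move: he; rewrite !inE => /or3P[]/eqP->; rewrite eqxx ?orbT.
move/allP: c3_ok => /(_ (val y)); rewrite mem_iota leq0n add0n ltn_ord => /(_ isT).
case: (nth _ tri _) => [[j1 j2] j3] /and3P[i1 i2 /and4P[i3 s12 s13 s23]].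
have ini j : inc y j -> ES j \in incident _ _ y by move=> h; rewrite inE /= SE_mem.
have /and3P[d12 d13 d23] := pig3 (sep_neq s12) (sep_neq s13) (sep_neq s23)
   (fin _ (ini _ i1)) (fin _ (ini _ i2)) (fin _ (ini _ i3)).
have gneq i j : f (EP i) != f (EP j) -> g i != g j.
  move=> h; apply/eqP => E; move/negP: h; apply; apply/eqP/val_inj.
  by rewrite -!gS_val; rewrite /g in E; rewrite E.
apply: (@good3_intro _ _ _ y); [exact: gneq|exact: gneq|exact: gneq|exact: fy (inx _ xa)|exact: fy (inx _ xb)|exact: fy (inx _ xc)].
Qed.
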